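(* Let $f:\mathbb{R}^d\to\mathbb{R}$ be convex and $L$-smooth with a minimizer $x^\star$, and let $x_0\in\mathbb{R}^d$ satisfy $f(x_0)-f(x^\star)\le\Delta_0$. Fix an integer $N\ge1$, let $v_0=\mathbf{0}$ and for $k=0,\dots,N-1$, $$v_{k+1}=v_k+\frac{12}{L(N-k+1)(N-k+2)(N-k+3)}\nabla f(x_k),\qquad x_{k+1}=x_k-\frac1L\nabla f(x_k)-\frac{(N-k)(N-k+1)(N-k+2)}{6}v_{k+1}.$$ Define $\delta_{k+1}=\frac{12}{(N-k+1)(N-k+2)(N-k+3)}$ for $k=0,\dots,N$. Then $$\sum_{k=0}^{N}\frac{\delta_{k+1}}{2}\|\nabla f(x_k)\|^2\le\frac{12L\Delta_0}{(N+2)(N+3)}.$$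
   Context: $L$-smooth means $\|\nabla f(x)-\nabla f(y)\|\le L\|x-y\|$ for all $x,y$; $\|\cdot\|$ is the Euclidean norm. The iteration is called the memory-saving OGM-G (M-OGM-G). *)

(* Defs.v *)
From HB Require Import structures.
From mathcomp Require Import all_boot all_order all_algebra.
From mathcomp Require Import all_classical all_reals all_analysis.
Set Implicit Arguments. Unset Strict Implicit. Unset Printing Implicit Defensive.
Import Order.TTheory GRing.Theory Num.Theory.
Import numFieldNormedType.Exports.
Local Open Scope ring_scope.

Definition dotv {R : realType} {d : nat} (u v : 'rV[R]_d) : R :=
  \sum_(i < d) u 0 i * v 0 i.
Definition enorm {R : realType} {d : nat} (u : 'rV[R]_d) : R :=
  Num.sqrt (dotv u u).

Definition is_gradient {R : realType} {d : nat}
  (f : 'rV[R]_d -> R) (g : 'rV[R]_d -> 'rV[R]_d) : Prop :=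
  forall x, differentiable f x /\ forall h, 'd f x h = dotv (g x) h.

Definition convex_fun {R : realType} {d : nat} (f : 'rV[R]_d -> R) : Prop :=
  forall (x y : 'rV[R]_d) (t : R), 0 <= t -> t <= 1 ->
    f (t *: x + (1 - t) *: y) <= t * f x + (1 - t) * f y.

Definition L_smooth {R : realType} {d : nat} (L : R) (g : 'rV[R]_d -> 'rV[R]_d) : Prop :=
  forall x y, enorm (g x - g y) <= L * enorm (x - y).

Fixpoint mogmg_state {R : realType} {d : nat} (g : 'rV[R]_d -> 'rV[R]_d)
  (L : R) (N : nat) (x0 : 'rV[R]_d) (k : nat) : 'rV[R]_d * 'rV[R]_d :=
  match k with
  | 0 => (x0, 0)
  | k'.+1 =>
      let: (x, v) := mogmg_state g L N x0 k' in
      let v' := v + (12 / (L * ((N - k' + 1)%:R * (N - k' + 2)%:R * (N - k' + 3)%:R)))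
                      *: g x in
      (x - L^-1 *: g x - (((N - k')%:R * (N - k' + 1)%:R * (N - k' + 2)%:R) / 6) *: v', v')
  end.

Definition mogmg_x {R : realType} {d : nat} g L N x0 k : 'rV[R]_d :=
  (@mogmg_state R d g L N x0 k).1.

Definition mogmg_delta {R : realType} (N k : nat) : R :=
  12 / ((N - k + 1)%:R * (N - k + 2)%:R * (N - k + 3)%:R).

(* Main.v *)
Require Import Defs.
From HB Require Import structures.
From mathcomp Require Import all_boot all_order all_algebra.
From mathcomp Require Import all_classical all_reals all_analysis.
From mathcomp Require Import ring lra zify.
From Stdlib Require Import Lia.
Import Order.TTheory GRing.Theory Num.Theory.
Import numFieldNormedType.Exports.
Local Open Scope classical_set_scope.
Local Open Scope ring_scope.

Section A.
Context {R : realType} {d : nat}.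
Local Notation V := 'rV[R]_d.

Lemma dotvC (u v : V) : dotv u v = dotv v u.
Proof. by apply: eq_bigr => i _; rewrite mulrC. Qed.
Lemma dotvDl (u w v : V) : dotv (u + w) v = dotv u v + dotv w v.
Proof. by rewrite /dotv -big_split; apply: eq_bigr => i _; rewrite mxE mulrDl. Qed.
Lemma dotvZl (c : R) (u v : V) : dotv (c *: u) v = c * dotv u v.
Proof. by rewrite /dotv mulr_sumr; apply: eq_bigr => i _; rewrite mxE mulrA. Qed.
Lemma dotvNl (u v : V) : dotv (- u) v = - dotv u v.
Proof. by rewrite /dotv -sumrN; apply: eq_bigr => i _; rewrite mxE mulNr. Qed.
Lemma dotvBl (u w v : V) : dotv (u - w) v = dotv u v - dotv w v.
Proof. by rewrite dotvDl dotvNl. Qed.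
Lemma dotvDr (u w v : V) : dotv v (u + w) = dotv v u + dotv v w.
Proof. by rewrite dotvC dotvDl !(dotvC v). Qed.
Lemma dotvZr (c : R) (u v : V) : dotv v (c *: u) = c * dotv v u.
Proof. by rewrite dotvC dotvZl dotvC. Qed.
Lemma dotvNr (u v : V) : dotv v (- u) = - dotv v u.
Proof. by rewrite dotvC dotvNl dotvC. Qed.
Lemma dotvBr (u w v : V) : dotv v (u - w) = dotv v u - dotv v w.
Proof. by rewrite dotvDr dotvNr. Qed.
Lemma dotv0l (v : V) : dotv 0 v = 0.
Proof. by rewrite -(scale0r 0) dotvZl mul0r. Qed.
Lemma dotv0r (v : V) : dotv v 0 = 0.
Proof. by rewrite dotvC dotv0l. Qed.
Lemma dotv_ge0 (u : V) : 0 <= dotv u u.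
Proof. by apply: sumr_ge0 => i _; rewrite -expr2 sqr_ge0. Qed.
Lemma enorm_sq (u : V) : enorm u ^+ 2 = dotv u u.
Proof. by rewrite /enorm sqr_sqrtr // dotv_ge0. Qed.
Lemma enorm_ge0 (u : V) : 0 <= enorm u.
Proof. exact: sqrtr_ge0. Qed.

Lemma line_derive (f : V -> R) (g : V -> V) (x v : V) (t : R) :
  is_gradient f g ->
  is_derive t 1 (fun s : R => f (x + s *: v)) (dotv (g (x + t *: v)) v).
Proof.
move=> hg.
have [df dfv] := hg (x + t *: v).
have E : (fun h : R => h^-1 *: (((fun s : R => f (x + s *: v)) \o shift t) (h *: 1)
             - (fun s : R => f (x + s *: v)) t)) =
         (fun h : R => h^-1 *: ((f \o shift (x + t *: v)) (h *: v) - f (x + t *: v))).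
  apply/funext => h /=; congr (_ *: (f _ - _)).
  by rewrite /shift /= scalerDl [h *: 1]mulr1 addrCA addrA.
have dv : derivable f (x + t *: v) v by exact: diff_derivable.
apply: DeriveDef.
  by rewrite /derivable E.
by rewrite /derive E -/(derive f (x + t *: v) v) deriveE // dfv.
Qed.

Lemma lip_dot (g : V -> V) (L : R) (x v : V) (c : R) :
  0 < L -> L_smooth L g -> 0 < c ->
  - (c * L * dotv v v) <= dotv (g (x + c *: v) - g x) v <= c * L * dotv v v.
Proof.
move=> L0 hL c0.
have h1 : enorm (g (x + c *: v) - g x) <= L * enorm (c *: v).
  by have := hL (x + c *: v) x; rewrite addrAC subrr add0r.
move: h1; move: (g (x + c *: v) - g x) => a h1.
have h2 : dotv a a <= L ^+ 2 * (c ^+ 2 * dotv v v).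
  have e : dotv (c *: v) (c *: v) = c ^+ 2 * dotv v v.
    by rewrite dotvZl dotvZr mulrA expr2.
  rewrite -e -!enorm_sq.
  have := enorm_ge0 a; have := enorm_ge0 (c *: v); nra.
have h3 := dotv_ge0 (a - (c * L) *: v).
have h4 := dotv_ge0 (a + (c * L) *: v).
rewrite ?dotvBl ?dotvBr ?dotvDl ?dotvDr ?dotvNl ?dotvNr ?dotvZl ?dotvZr ?(dotvC v a) in h3 h4.
have S0 := dotv_ge0 v.
have m0 : 0 < c * L by apply: mulr_gt0.
move: h2 h3 h4 S0 m0; set P := dotv a a; set Q := dotv a v; set S := dotv v v; set m := c * L => h2 h3 h4 S0 m0.
have hm : L ^+ 2 * (c ^+ 2 * S) = m * m * S by rewrite /m; ring.
rewrite hm in h2.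
apply/andP; split; nra.
Qed.


Lemma descent (f : V -> R) (g : V -> V) (L : R) (x z : V) :
  0 < L -> is_gradient f g -> L_smooth L g ->
  f z <= f x + dotv (g x) (z - x) + L / 2 * dotv (z - x) (z - x).
Proof.
move=> L0 hg hL.
have hz : z = x + 1 *: (z - x) by rewrite scale1r addrC subrK.
move: (z - x) hz => v ->; rewrite scale1r.
set A := dotv (g x) v; set S := dotv v v; set B := L / 2 * S.
pose k := (fun s : R => f (x + s *: v)) - (@id R) * cst A - (@id R) * ((@id R) * cst B).
have kd : forall s : R, is_derive s 1 k (dotv (g (x + s *: v)) v - A - (s + s) * B).
  move=> s.
  have H1 := line_derive f g x v s hg.
  have H2 := is_deriveM (is_derive_id s (1:R)) (is_derive_cst A s (1:R)).
  have H3 := is_deriveM (is_derive_id s (1:R))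
     (is_deriveM (is_derive_id s (1:R)) (is_derive_cst B s (1:R))).
  have H := is_deriveB (is_deriveB H1 H2) H3.
  apply: is_derive_eq H _.
  have sE : forall a b : R, a *: b = a * b by [].
  have mE : forall (F G : R -> R) t, (F * G) t = F t * G t by [].
  rewrite /= !sE /cst mE /=.
  ring.
have [c c01 hc] : exists2 c, c \in `]0, 1[%R & k 1 - k 0 = (dotv (g (x + c *: v)) v - A - (c + c) * B) * (1 - 0).
  apply: (MVT (f := k) (df := fun c => dotv (g (x + c *: v)) v - A - (c + c) * B) ltr01 (fun s _ => kd s)).
  by apply: derivable_within_continuous => s hs; case: (kd s).
have c0 : 0 < c by move: c01; rewrite in_itv /= => /andP[].
have := lip_dot g L x v c L0 hL c0; rewrite dotvBl -/A -/S => /andP[_ hup].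
have hk : k 1 - k 0 <= 0.
  have e : (c + c) * B = c * L * S by rewrite /B; field.
  rewrite hc subr0 mulr1 e; lra.
have bE : forall (F G : R -> R) t, (F - G) t = F t - G t by [].
have mE : forall (F G : R -> R) t, (F * G) t = F t * G t by [].
move: hk; rewrite /k !bE !mE /cst /= scale0r addr0 scale1r mul0r mul1r !mul0r !mul1r; lra.
Qed.


Lemma convex_fo (f : V -> R) (g : V -> V) (L : R) (x z : V) :
  0 < L -> is_gradient f g -> convex_fun f -> L_smooth L g ->
  f x + dotv (g x) (z - x) <= f z.
Proof.
move=> L0 hg hc hL.
have hz : z = x + 1 *: (z - x) by rewrite scale1r addrC subrK.
have key : forall t : R, 0 < t -> t <= 1 ->
    dotv (g x) (z - x) - t * L * dotv (z - x) (z - x) <= f z - f x.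
  move=> t t0 t1.
  have hconv := hc z x t (ltW t0) t1.
  have ee : t *: z + (1 - t) *: x = x + t *: (z - x).
    by apply/rowP => i; rewrite !mxE; ring.
  rewrite ee in hconv.
  move: (z - x) hz hconv => v -> hconv; rewrite scale1r in hconv *.
  set A := dotv (g x) v; set S := dotv v v.
  have hcont : {within `[0, t], continuous (fun s : R => f (x + s *: v))}.
    by apply: derivable_within_continuous => s _; case: (line_derive f g x v s hg).
  have [c c01 hcc] := MVT (f := fun s : R => f (x + s *: v))
      (df := fun s => dotv (g (x + s *: v)) v) t0 (fun s _ => line_derive f g x v s hg)
      hcont.
  have c0 : 0 < c by move: c01; rewrite in_itv /= => /andP[].
  have ct : c < t by move: c01; rewrite in_itv /= => /andP[].
  have := lip_dot g L x v c L0 hL c0; rewrite dotvBl -/A -/S => /andP[hlo _].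
  have S0 : 0 <= S by exact: dotv_ge0.
  move: hcc; rewrite scale0r addr0 subr0 => hcc.
  have h1 : t * (A - t * L * S) <= t * dotv (g (x + c *: v)) v.
    rewrite ler_pM2l //.
    have : c * L * S <= t * L * S.
      exact: (ler_wpM2r S0 (ler_wpM2r (ltW L0) (ltW ct))).
    lra.
  have h2 : t * (A - t * L * S) <= t * (f (x + v) - f x).
    apply: (le_trans h1).
    have -> : t * dotv (g (x + c *: v)) v = f (x + t *: v) - f x.
      by rewrite hcc mulrC.
    lra.
  by rewrite ler_pM2l in h2.
set A := dotv (g x) (z - x); set S := dotv (z - x) (z - x).
have S0 : 0 <= S by exact: dotv_ge0.
suff : A <= f z - f x by lra.
apply/ler_addgt0Pr => e e0.
set D := L * S + e + 1.
have D0 : 0 < D by rewrite /D; have := mulr_ge0 (ltW L0) S0; lra.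
set t := e / D.
have t0 : 0 < t by rewrite /t divr_gt0.
have tD : t * D = e by rewrite /t divfK // gt_eqF.
have t1 : t <= 1.
  have : t * D <= 1 * D by rewrite tD mul1r /D; have := mulr_ge0 (ltW L0) S0; lra.
  by rewrite ler_pM2r.
have := key t t0 t1; rewrite -/A -/S.
have : t * L * S <= e.
  have LS0 := mulr_ge0 (ltW L0) S0.
  have : t * (L * S) <= t * D by rewrite ler_pM2l // /D; lra.
  by rewrite tD mulrA.
lra.
Qed.


Lemma coco (f : V -> R) (g : V -> V) (L : R) (x y : V) :
  0 < L -> is_gradient f g -> convex_fun f -> L_smooth L g ->
  f y + dotv (g y) (x - y) + dotv (g x - g y) (g x - g y) / (2 * L) <= f x.
Proof.
move=> L0 hg hc hL.
set w := g x - g y; set z := x - L^-1 *: w.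
have h1 := convex_fo f g L y z L0 hg hc hL.
have h2 := descent f g L x z L0 hg hL.
have e1 : z - x = (- L^-1) *: w by apply/rowP => i; rewrite /z !mxE; ring.
have e2 : z - y = (x - y) - L^-1 *: w by apply/rowP => i; rewrite /z !mxE; ring.
have e3 : dotv w w = dotv (g x) w - dotv (g y) w by rewrite {1}/w dotvBl.
rewrite e1 e2 ?dotvBr ?dotvZr ?dotvZl in h1 h2.
move: h1 h2 e3; set W := dotv w w; set Gx := dotv (g x) w; set Gy := dotv (g y) w.
move=> h1 h2 e3.
have e4 : L^-1 * W = L^-1 * Gx - L^-1 * Gy by rewrite e3 mulrBr.
have e5 : L / 2 * (- L^-1 * (- L^-1 * W)) = L^-1 * W / 2.
  by field; rewrite gt_eqF.
have e6 : W / (2 * L) = L^-1 * W / 2 by field; rewrite gt_eqF.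
rewrite e5 in h2; rewrite e6 dotvBr.
lra.
Qed.

Lemma star_bound (f : V -> R) (g : V -> V) (L : R) (x xs : V) :
  0 < L -> is_gradient f g -> L_smooth L g -> (forall y, f xs <= f y) ->
  dotv (g x) (g x) / (2 * L) <= f x - f xs.
Proof.
move=> L0 hg hL hmin.
set z := x - L^-1 *: g x.
have h2 := descent f g L x z L0 hg hL.
have h3 := hmin z.
have e1 : z - x = (- L^-1) *: g x by apply/rowP => i; rewrite /z !mxE; ring.
rewrite e1 ?dotvZr ?dotvZl in h2.
move: h2; set G := dotv (g x) (g x) => h2.
have e5 : L / 2 * (- L^-1 * (- L^-1 * G)) = L^-1 * G / 2.
  by field; rewrite gt_eqF.
have e6 : G / (2 * L) = L^-1 * G / 2 by field; rewrite gt_eqF.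
rewrite e5 in h2; rewrite e6.
lra.
Qed.


Definition lamf (r : R) : R := 6 / ((r + 2) * (r + 3)).
Definition af (r : R) : R := 12 / ((r + 1) * (r + 2) * (r + 3)).
Definition Af (r : R) : R := - (lamf r / 2).
Definition Bf (r : R) : R := - (r + 1).
Definition Cf (r : R) : R := - (r * (r + 1) * (r + 2) * (r + 3) / 24).

Definition clo (L l0 A0 F0 FN G0sq : R) (XN GN : V) (r F : R) (X Vv G : V) : R :=
  l0 * (F0 - FN) - lamf r * (F - FN) - L * dotv Vv (XN - X)
  + Af r * dotv G G / L + Bf r * dotv G Vv + Cf r * L * dotv Vv Vv
  - A0 * G0sq / L - (lamf r - l0) * dotv GN GN / (2 * L) + dotv GN Vv.

Definition dotvE := (dotvDl, dotvDr, dotvNl, dotvNr, dotvZl, dotvZr).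

Lemma step_identity (L l0 A0 F0 FN G0sq r F F1 : R) (XN GN X Vv G G1 X1 V1 : V) :
  0 < L -> 0 <= r ->
  V1 = Vv + (12 / (L * ((r + 1) * (r + 2) * (r + 3)))) *: G ->
  X1 = X - L^-1 *: G - ((r * (r + 1) * (r + 2)) / 6) *: V1 ->
  clo L l0 A0 F0 FN G0sq XN GN (r - 1) F1 X1 V1 G1
  - clo L l0 A0 F0 FN G0sq XN GN r F X Vv G - af r * dotv G G / (2 * L)
  = lamf (r - 1) * (F - F1 - dotv G1 (X - X1) - dotv (G - G1) (G - G1) / (2 * L))
    + af r * (FN - F - dotv G (XN - X) - dotv (GN - G) (GN - G) / (2 * L)).
Proof.
move=> L0 r0 -> ->.
rewrite /clo /Af /Bf /Cf /af /lamf.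
rewrite !dotvE.
rewrite ?(dotvC Vv X) ?(dotvC G X) ?(dotvC G1 X) ?(dotvC XN X) ?(dotvC GN X).
rewrite ?(dotvC G Vv) ?(dotvC G1 Vv) ?(dotvC XN Vv) ?(dotvC GN Vv).
rewrite ?(dotvC G1 G) ?(dotvC XN G) ?(dotvC GN G).
rewrite ?(dotvC XN G1) ?(dotvC GN G1) ?(dotvC GN XN).
have r1 : r + 1 != 0 by rewrite gt_eqF // ltr_pwDr.
have r2 : r + 2 != 0 by rewrite gt_eqF // ltr_pwDr.
have r3 : r + 3 != 0 by rewrite gt_eqF // ltr_pwDr.
have L1 : L != 0 by rewrite gt_eqF.
have -> : r - 1 + 1 = r by ring.
have -> : r - 1 + 2 = r + 1 by ring.
have -> : r - 1 + 3 = r + 2 by ring.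
by field; rewrite L1 r1 r2 r3.
Qed.


Lemma vS (g : V -> V) (L : R) (N : nat) (x0 : V) (k : nat) :
  (mogmg_state g L N x0 k.+1).2 = (mogmg_state g L N x0 k).2 +
    (12 / (L * ((N - k + 1)%:R * (N - k + 2)%:R * (N - k + 3)%:R))) *: g (mogmg_x g L N x0 k).
Proof. by rewrite /mogmg_x /=; case: (mogmg_state g L N x0 k). Qed.

Lemma xS (g : V -> V) (L : R) (N : nat) (x0 : V) (k : nat) :
  mogmg_x g L N x0 k.+1 = mogmg_x g L N x0 k - L^-1 *: g (mogmg_x g L N x0 k)
    - (((N - k)%:R * (N - k + 1)%:R * (N - k + 2)%:R) / 6) *: (mogmg_state g L N x0 k.+1).2.
Proof. by rewrite /mogmg_x /=; case: (mogmg_state g L N x0 k). Qed.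

Lemma lamf_ge0 (r : R) : 0 <= r -> 0 <= lamf r.
Proof. by move=> r0; rewrite /lamf divr_ge0 // mulr_ge0 // addr_ge0. Qed.
Lemma af_ge0 (r : R) : 0 <= r -> 0 <= af r.
Proof. by move=> r0; rewrite /af divr_ge0 // !mulr_ge0 // addr_ge0. Qed.

Lemma main_ind (f : V -> R) (g : V -> V) (L : R) (x0 : V) (N : nat) :
  0 < L -> is_gradient f g -> convex_fun f -> L_smooth L g ->
  forall k, (k <= N)%N ->
  \sum_(0 <= i < k) af (N - i)%:R * dotv (g (mogmg_x g L N x0 i)) (g (mogmg_x g L N x0 i)) / (2 * L)
  <= clo L (lamf N%:R) (Af N%:R) (f x0) (f (mogmg_x g L N x0 N)) (dotv (g x0) (g x0))
       (mogmg_x g L N x0 N) (g (mogmg_x g L N x0 N)) (N - k)%:R (f (mogmg_x g L N x0 k))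
       (mogmg_x g L N x0 k) (mogmg_state g L N x0 k).2 (g (mogmg_x g L N x0 k)).
Proof.
move=> L0 hg hc hL; elim=> [|k IH] hk.
  rewrite big_geq // subn0 /clo /mogmg_x /= !dotv0l !dotv0r.
  have -> : lamf N%:R - lamf N%:R = 0 by rewrite subrr.
  lra.
have hk' : (k < N)%N := hk.
have IH' := IH (ltnW hk).
set r := (N - k)%:R : R.
have hr : (N - k.+1)%:R = r - 1 :> R.
  rewrite /r; have -> : (N - k = (N - k.+1) + 1)%N by lia.
  by rewrite natrD; ring.
have r1 : 1 <= r by have := ler0n R (N - k.+1); rewrite hr; lra.
have r0 : 0 <= r by apply: le_trans r1.
have hV := vS g L N x0 k.
have hX := xS g L N x0 k.
rewrite !natrD -/r in hV hX.
have id := step_identity L (lamf N%:R) (Af N%:R) (f x0) (f (mogmg_x g L N x0 N))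
   (dotv (g x0) (g x0)) r (f (mogmg_x g L N x0 k)) (f (mogmg_x g L N x0 k.+1))
   (mogmg_x g L N x0 N) (g (mogmg_x g L N x0 N)) (mogmg_x g L N x0 k)
   (mogmg_state g L N x0 k).2 (g (mogmg_x g L N x0 k)) (g (mogmg_x g L N x0 k.+1))
   (mogmg_x g L N x0 k.+1) (mogmg_state g L N x0 k.+1).2 L0 r0 hV hX.
have Q1 := coco f g L (mogmg_x g L N x0 k) (mogmg_x g L N x0 k.+1) L0 hg hc hL.
have Q2 := coco f g L (mogmg_x g L N x0 N) (mogmg_x g L N x0 k) L0 hg hc hL.
have p1 := lamf_ge0 (r - 1) ltac:(lra).
have p2 := af_ge0 r r0.
rewrite big_nat_recr //= hr -/r.
set F := f (mogmg_x g L N x0 k) in id Q1 Q2 IH' *.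
set F1 := f (mogmg_x g L N x0 k.+1) in id Q1 Q2 *.
set G := g (mogmg_x g L N x0 k) in id Q1 Q2 IH' *.
set G1 := g (mogmg_x g L N x0 k.+1) in id Q1 Q2 *.
set X := mogmg_x g L N x0 k in id Q1 Q2 IH' *.
set X1 := mogmg_x g L N x0 k.+1 in id Q1 Q2 *.
set XN := mogmg_x g L N x0 N in id Q1 Q2 IH' *.
set FN := f XN in id Q1 Q2 IH' *.
set GN := g XN in id Q1 Q2 IH' *.
have m1 : 0 <= lamf (r - 1) * (F - F1 - dotv G1 (X - X1) - dotv (G - G1) (G - G1) / (2 * L)).
  by apply: mulr_ge0 => //; lra.
have m2 : 0 <= af r * (FN - F - dotv G (XN - X) - dotv (GN - G) (GN - G) / (2 * L)).
  by apply: mulr_ge0 => //; lra.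
have e : af r * dotv G G / (2 * L) = af r * (dotv G G / (2 * L)) by rewrite mulrA.
lra.
Qed.

End A.

Local Close Scope classical_set_scope.

Theorem theorem2 (R : realType) (d : nat) (f : 'rV[R]_d -> R)
  (g : 'rV[R]_d -> 'rV[R]_d) (L : R) (xstar x0 : 'rV[R]_d) (Delta0 : R) (N : nat) :
  0 < L ->
  is_gradient f g ->
  convex_fun f ->
  L_smooth L g ->
  (forall y, f xstar <= f y) ->
  f x0 - f xstar <= Delta0 ->
  (1 <= N)%N ->
  \sum_(0 <= k < N.+1) (mogmg_delta N k / 2) * enorm (g (mogmg_x g L N x0 k)) ^+ 2
    <= 12 * L * Delta0 / ((N + 2)%:R * (N + 3)%:R).
Proof.
move=> L0 hg hc hL hmin hD hN.
have L1 : L != 0 by rewrite gt_eqF.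
have E : \sum_(0 <= k < N.+1) (mogmg_delta N k / 2) * enorm (g (mogmg_x g L N x0 k)) ^+ 2
   = L * \sum_(0 <= k < N.+1) af (N - k)%:R *
        dotv (g (mogmg_x g L N x0 k)) (g (mogmg_x g L N x0 k)) / (2 * L).
  rewrite mulr_sumr; apply: eq_bigr => k _.
  rewrite enorm_sq /mogmg_delta /af !natrD.
  have r0 := ler0n R (N - k).
  have r1 : (N - k)%:R + 1 != 0 :> R by rewrite gt_eqF // ltr_pwDr.
  have r2 : (N - k)%:R + 2 != 0 :> R by rewrite gt_eqF // ltr_pwDr.
  have r3 : (N - k)%:R + 3 != 0 :> R by rewrite gt_eqF // ltr_pwDr.
  by field; rewrite ?r1 ?r2 ?r3 ?L1.
rewrite E big_nat_recr //= subnn.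
have H := main_ind f g L x0 N L0 hg hc hL N (leqnn N).
rewrite subnn /clo !subrr dotv0r in H.
have s0 := star_bound f g L x0 xstar L0 hg hL hmin.
have sN := star_bound f g L (mogmg_x g L N x0 N) xstar L0 hg hL hmin.
have l0e : lamf (0 : R) = 1 by rewrite /lamf; field.
have Afe : Af (0 : R) = - (1 / 2) by rewrite /Af l0e.
have Bfe : Bf (0 : R) = -1 by rewrite /Bf add0r.
have Cfe : Cf (0 : R) = 0 by rewrite /Cf !mul0r oppr0.
have afe : af (0 : R) = 2 by rewrite /af; field.
have A0e : Af (N%:R : R) = - (lamf N%:R / 2) by [].
rewrite l0e Afe Bfe Cfe A0e in H.
rewrite afe.
have l0ge := lamf_ge0 _ (ler0n R N).
move: H s0 sN l0ge.
set l0 := lamf N%:R.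
set S := \sum_(0 <= i < N) _.
set G0 := dotv (g x0) (g x0).
set XN := mogmg_x g L N x0 N.
set GN := dotv (g XN) (g XN).
set vN := (mogmg_state g L N x0 N).2.
move=> H s0 sN l0ge.
have m0 : l0 * (G0 / (2 * L)) <= l0 * (f x0 - f xstar) by rewrite ler_wpM2l.
have mN : l0 * (GN / (2 * L)) <= l0 * (f XN - f xstar) by rewrite ler_wpM2l.
have e1 : - (l0 / 2) * G0 / L = - (l0 * (G0 / (2 * L))) by field.
have e2 : - (1 / 2) * GN / L = - (GN / (2 * L)) by field.
have e3 : (1 - l0) * GN / (2 * L) = GN / (2 * L) - l0 * (GN / (2 * L)) by field.
have e4 : 2 * GN / (2 * L) = 2 * (GN / (2 * L)) by field.
have e5 : l0 * (f x0 - f XN) + l0 * (f x0 - f xstar) + l0 * (f XN - f xstar)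
   = 2 * l0 * (f x0 - f xstar) by ring.
have hD' : 2 * l0 * (f x0 - f xstar) <= 2 * l0 * Delta0.
  by rewrite ler_wpM2l // mulr_ge0.
have tot : S + 2 * GN / (2 * L) <= 2 * l0 * Delta0.
  rewrite e1 e2 e3 in H; rewrite e4; lra.
have e6 : 12 * L * Delta0 / ((N + 2)%:R * (N + 3)%:R) = L * (2 * l0 * Delta0).
  rewrite /l0 /lamf !natrD.
  have r0 := ler0n R N.
  have r2 : N%:R + 2 != 0 :> R by rewrite gt_eqF // ltr_pwDr.
  have r3 : N%:R + 3 != 0 :> R by rewrite gt_eqF // ltr_pwDr.
  by field; rewrite ?r2 ?r3.
by rewrite e6 ler_wpM2l // ltW.
Qed.
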